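(* Let $E$ be an almost finitely generated $R$-module and $f:R\to S$ a ring morphism satisfying going-down (generizing). Then ${}^af^{-1}(\mathrm{Supp}_R(E))=\mathrm{Supp}_S(E\otimes_RS)$.
   Context: Rings are commutative and unital. An $A$-module $E$ is almost finitely generated over $A$ if there is a ring morphism $A\to B$ such that $E$ is a finitely generated $B$-module whose induced $A$-module structure is the original one. ${}^af:\mathrm{Spec}(S)\to\mathrm{Spec}(R)$ is $Q\mapsto f^{-1}(Q)$; $\mathrm{Supp}_A(F)=\{P\in\mathrm{Spec}(A)\mid F_P\neq0\}$. *)

(* Defs.v *)
From HB Require Import structures.
From mathcomp Require Import all_boot all_order all_algebra.
Set Implicit Arguments. Unset Strict Implicit. Unset Printing Implicit Defensive.
Import GRing.Theory.
Local Open Scope ring_scope.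

Definition is_ideal (R : comPzRingType) (P : R -> Prop) : Prop :=
  P 0 /\ (forall x y, P x -> P y -> P (x + y)) /\ (forall r x, P x -> P (r * x)).

Definition is_prime (R : comPzRingType) (P : R -> Prop) : Prop :=
  is_ideal P /\ ~ P 1 /\ (forall x y, P (x * y) -> P x \/ P y).

(* ^a f : Spec S -> Spec R,  Q |-> f^{-1}(Q) *)
Definition comap (R S : comPzRingType) (f : R -> S) (Q : S -> Prop) : R -> Prop :=
  fun r => Q (f r).

Definition going_down (R S : comPzRingType) (f : {rmorphism R -> S}) : Prop :=
  forall (p p' : R -> Prop) (Q : S -> Prop),
    is_prime p -> is_prime p' -> (forall r, p' r -> p r) ->
    is_prime Q -> (forall r, comap f Q r <-> p r) ->
    exists Q' : S -> Prop, is_prime Q' /\ (forall s, Q' s -> Q s) /\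
                           (forall r, comap f Q' r <-> p' r).

(* E_P = 0 : every x/1 vanishes in the localization, i.e. s x = 0 for some s ∉ P. *)
Definition localization_zero (R : comPzRingType) (E : lmodType R) (P : R -> Prop) : Prop :=
  forall x : E, exists s : R, ~ P s /\ s *: x = 0.

Definition in_supp (R : comPzRingType) (E : lmodType R) (P : R -> Prop) : Prop :=
  is_prime P /\ ~ localization_zero E P.

Definition module_action (B : comPzRingType) (E : zmodType) (act : B -> E -> E) : Prop :=
  (forall b x y, act b (x + y) = act b x + act b y) /\
  (forall a b x, act (a + b) x = act a x + act b x) /\
  (forall a b x, act (a * b) x = act a (act b x)) /\
  (forall x, act 1 x = x).

Definition finitely_generated_action (B : comPzRingType) (E : zmodType)
    (act : B -> E -> E) : Prop :=
  exists (n : nat) (xs : 'I_n -> E),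
    forall x : E, exists bs : 'I_n -> B, x = \sum_(i < n) act (bs i) (xs i).

Definition almost_fg (R : comPzRingType) (E : lmodType R) : Prop :=
  exists (B : comPzRingType) (g : {rmorphism R -> B}) (act : B -> E -> E),
    module_action act /\ (forall r x, act (g r) x = r *: x) /\
    finitely_generated_action act.

(* (T, b) is the tensor product E ⊗_R S, with its S-module structure
   s·(x ⊗ s') = x ⊗ (s s'); b x s stands for x ⊗ s. *)
Definition is_tensor_base_change (R S : comPzRingType) (f : {rmorphism R -> S})
    (E : lmodType R) (T : lmodType S) (b : E -> S -> T) : Prop :=
  (forall x y s, b (x + y) s = b x s + b y s) /\
  (forall x s s', b x (s + s') = b x s + b x s') /\
  (forall r x s, b (r *: x) s = b x (f r * s)) /\
  (forall x s s', b x (s * s') = s *: b x s') /\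
  (forall (M : zmodType) (phi : E -> S -> M),
     (forall x y s, phi (x + y) s = phi x s + phi y s) ->
     (forall x s s', phi x (s + s') = phi x s + phi x s') ->
     (forall r x s, phi (r *: x) s = phi x (f r * s)) ->
     exists g : T -> M,
       (forall u v, g (u + v) = g u + g v) /\
       (forall x s, g (b x s) = phi x s) /\
       (forall g' : T -> M, (forall u v, g' (u + v) = g' u + g' v) ->
          (forall x s, g' (b x s) = phi x s) -> forall u, g' u = g u)).

(* Main.v *)
Require Import Defs.
From HB Require Import structures.
From mathcomp Require Import all_boot all_order all_algebra ring.
From mathcomp Require Import boolp.
Set Implicit Arguments. Unset Strict Implicit. Unset Printing Implicit Defensive.
Import GRing.Theory.
Local Open Scope ring_scope.
Local Open Scope quotient_scope.

Section FracK.
Variables (S : comPzRingType) (Q : S -> Prop) (HQ : is_prime Q).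

Definition Snz : Type := S.
HB.instance Definition _ := GRing.ComPzRing.on Snz.
Lemma Snz_nz : (1 : Snz) != 0.
Proof.
apply/eqP => h; case: HQ => [[Q0 _] [Q1 _]]; apply: Q1; by rewrite h.
Qed.
HB.instance Definition _ := GRing.PzSemiRing_isNonZero.Build Snz Snz_nz.

Definition Qp : {pred Snz} := fun s => `[< Q s >].
Lemma Qp_ideal : idealr_closed Qp.
Proof.
case: HQ => [[Q0 [QD QM]] [Q1 QP]].
split; first by apply/asboolP.
  by apply/asboolP.
move=> a u v /asboolP Hu /asboolP Hv; apply/asboolP; apply: QD => //; exact: QM.
Qed.
HB.instance Definition _ := isIdealr.Build Snz Qp Qp_ideal.
Lemma Qp_prime : prime_idealr_closed Qp.
Proof.
case: HQ => [[Q0 [QD QM]] [Q1 QP]].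
move=> u v /asboolP /QP [h|h]; apply/orP; [left|right]; exact/asboolP.
Qed.
HB.instance Definition _ := isPrimeIdealrClosed.Build Snz Qp Qp_prime.

Local Notation D := {ideal_quot Qp}.
Definition Dunit : {pred D} := fun x => `[< exists y : D, y * x = 1 >].
Definition Dinv (x : D) : D :=
  match pselect (exists y : D, y * x = 1) with
  | left H => proj1_sig (cid H) | right _ => x end.
Lemma Dmulv : {in Dunit, left_inverse 1 Dinv *%R}.
Proof.
move=> x /asboolP H; rewrite /Dinv; case: pselect => // H'.
by case: (cid H').
Qed.
Lemma DunitPl : forall x y : D, y * x = 1 -> Dunit x.
Proof. by move=> x y h; apply/asboolP; exists y. Qed.
Lemma Dinv_out : {in [predC Dunit], Dinv =1 id}.
Proof.
move=> x; rewrite inE => /asboolPn H; rewrite /Dinv; case: pselect => // H'.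
Qed.
HB.instance Definition _ := GRing.ComNzRing_hasMulInverse.Build D Dmulv DunitPl Dinv_out.
HB.instance Definition _ := GRing.ComUnitRing_isIntegral.Build D (@Quotient.rquot_IdomainAxiom _ _).
Local Notation K := {fraction D}.
Local Notation "x %:F" := (@FracField.tofrac _ x).
Definition hK (s : S) : K := (\pi_D (s : Snz))%:F.
Lemma hK_add x y : hK (x + y) = hK x + hK y.
Proof. by rewrite /hK -rmorphD /=; congr (_ %:F); rewrite -pi_addr. Qed.
Lemma hK_mul x y : hK (x * y) = hK x * hK y.
Proof. by rewrite /hK -rmorphM /=; congr (_ %:F); rewrite -pi_mulr. Qed.
Lemma hK_1 : hK 1 = 1.
Proof. by rewrite /hK; rewrite -[RHS]tofrac1; congr (_ %:F); rewrite pi_oner. Qed.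
Lemma hK_0 s : hK s = 0 <-> Q s.
Proof.
rewrite /hK; split.
  move/eqP; rewrite -tofrac0 tofrac_eq => /eqP h.
  have : \pi_D (s : Snz) == 0 by rewrite h.
  rewrite -pi_zeror. rewrite piE /= Quotient.equivE subr0 => /asboolP //.
move=> Hs; apply/eqP; rewrite -tofrac0 tofrac_eq -pi_zeror piE /= Quotient.equivE subr0; exact/asboolP.
Qed.

Lemma field_of_prime :
  exists (K : fieldType) (h : S -> K),
    (forall x y, h (x + y) = h x + h y) /\ (forall x y, h (x * y) = h x * h y) /\
    h 1 = 1 /\ (forall s, h s = 0 <-> Q s).
Proof.
exists K, hK.
split; first exact: hK_add. split; first exact: hK_mul. split; first exact: hK_1.
exact: hK_0.
Qed.
End FracK.

From mathcomp Require Import classical_sets.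
Section ZornSec.
Local Open Scope classical_set_scope.

Lemma zorn_prop (T : Type) (P : (T -> Prop) -> Prop) (b : T -> Prop) :
  P b ->
  (forall F : (T -> Prop) -> Prop, (forall X, F X -> P X) -> (exists X, F X) ->
     (forall X Y, F X -> F Y -> (forall t, X t -> Y t) \/ (forall t, Y t -> X t)) ->
     P (fun t => exists X, F X /\ X t)) ->
  exists A, P A /\ forall B, P B -> (forall t, A t -> B t) -> forall t, B t -> A t.
Proof.
move=> Pb Hch.
pose P' := fun X : set T => P (fun t => X t \/ b t).
have [|A0 [PA0 maxA0]] := @Zorn_bigcup T P'.
  move=> F FP Ftot; rewrite /P'.
  have [[X FX]|nF] := pselect (exists X, F X); last first.
    have -> : (fun t => (\bigcup_(X in F) X) t \/ b t) = b.
      apply/funext => t; apply/propext; split; last by right.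
      by case=> // -[X FX _]; case: nF; exists X.
    exact: Pb.
  pose G := fun Y : T -> Prop => exists X, F X /\ Y = (fun t => X t \/ b t).
  have -> : (fun t => (\bigcup_(X in F) X) t \/ b t) = (fun t => exists Y, G Y /\ Y t).
    apply/funext => t; apply/propext; split.
      case=> [[Y FY Yt]|bt].
        by exists (fun t => Y t \/ b t); split; [exists Y|left].
      by exists (fun t => X t \/ b t); split; [exists X|right].
    case=> Y [[X1 [FX1 ->]] [Xt|bt]]; last by right.
    by left; exists X1.
  apply: Hch.
  - by move=> Y [X1 [FX1 ->]]; apply: FP.
  - by exists (fun t => X t \/ b t), X.
  - move=> Y Z [X1 [FX1 ->]] [X2 [FX2 ->]].
    have [h|h] := Ftot _ _ FX1 FX2.
      by left=> t [/h ?|?]; [left|right].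
    by right=> t [/h ?|?]; [left|right].
exists (fun t => A0 t \/ b t); split => // B PB AB t Bt.
have [//|nA] := pselect (A0 t \/ b t); exfalso.
apply: (maxA0 B); last first.
  rewrite /P'.
  have -> : (fun t => B t \/ b t) = B.
    apply/funext => u; apply/propext; split; [case=> // /(fun h => AB u (or_intror h))|]; by [|left].
  exact: PB.
split; first by move=> u Au; apply: AB; left.
by move=> /(_ t Bt) At; apply: nA; left.
Qed.
End ZornSec.
Section Act.
Variables (B : comPzRingType) (E : zmodType) (act : B -> E -> E).
Hypothesis Ha : module_action act.

Lemma actDr b x y : act b (x + y) = act b x + act b y.
Proof. by case: Ha. Qed.
Lemma actDl a b x : act (a + b) x = act a x + act b x.
Proof. by case: Ha => _ []. Qed.
Lemma actM a b x : act (a * b) x = act a (act b x).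
Proof. by case: Ha => _ [_ []]. Qed.
Lemma act1 x : act 1 x = x.
Proof. by case: Ha => _ [_ [_]]. Qed.
Lemma act0r b : act b 0 = 0.
Proof. have h := actDr b 0 0; rewrite addr0 in h. by rewrite -{1}(addKr (act b 0) (act b 0)) -h addNr. Qed.
Lemma act0l x : act 0 x = 0.
Proof. have h := actDl 0 0 x; rewrite addr0 in h. by rewrite -{1}(addKr (act 0 x) (act 0 x)) -h addNr. Qed.
Lemma actNl b x : act (- b) x = - act b x.
Proof. by apply/eqP; rewrite -addr_eq0 -actDl addNr act0l. Qed.
Lemma actBl a b x : act (a - b) x = act a x - act b x.
Proof. by rewrite actDl actNl. Qed.
Lemma actNr b x : act b (- x) = - act b x.
Proof. by apply/eqP; rewrite -addr_eq0 -actDr addNr act0r. Qed.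
Lemma actC a b x : act a (act b x) = act b (act a x).
Proof. by rewrite -!actM mulrC. Qed.

Inductive Sub (G : E -> Prop) : E -> Prop :=
| Sub_gen z : G z -> Sub G z
| Sub0 : Sub G 0
| SubD z w : Sub G z -> Sub G w -> Sub G (z + w)
| SubA c z : Sub G z -> Sub G (act c z).

Definition submod (X : E -> Prop) :=
  X 0 /\ (forall z w, X z -> X w -> X (z + w)) /\ (forall c z, X z -> X (act c z)).

Lemma Sub_submod G : submod (Sub G).
Proof. split; first exact: Sub0. split; [exact: SubD | exact: SubA]. Qed.

Lemma Sub_min G X : submod X -> (forall z, G z -> X z) -> forall z, Sub G z -> X z.
Proof.
move=> [X0 [XD XA]] GX z; elim => //; clear z.
- by move=> z w _ ? _ ?; apply: XD.
- by move=> c z _ ?; apply: XA.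
Qed.

Lemma submod_sum X n (F : 'I_n -> E) : submod X -> (forall i, X (F i)) -> X (\sum_i F i).
Proof.
move=> [X0 [XD XA]] HF; elim/big_ind: _ => //.
Qed.

Definition Loc (P : B -> Prop) (X : E -> Prop) z := exists v, ~ P v /\ X (act v z).

Lemma Loc_submod P X : is_prime P -> submod X -> submod (Loc P X).
Proof.
move=> [[P0 [PD PM]] [P1 PP]] [X0 [XD XA]]; split.
  by exists 1; split => //; rewrite act0r.
split.
  move=> z w [v1 [nv1 h1]] [v2 [nv2 h2]]; exists (v1 * v2); split.
    by move=> /PP [].
  rewrite actDr; apply: XD.
    by rewrite mulrC actM; apply: XA.
  by rewrite actM; apply: XA.
move=> c z [v [nv h]]; exists v; split => //.
by rewrite actC; apply: XA.
Qed.

Lemma Loc_idem P X z : is_prime P -> Loc P (Loc P X) z -> Loc P X z.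
Proof.
move=> [_ [_ PP]] [v [nv [v' [nv' h]]]]; exists (v' * v); split.
  by move=> /PP [].
by rewrite actM.
Qed.



Lemma Loc_one P X z : is_prime P -> X z -> Loc P X z.
Proof. by move=> [_ [P1 _]] h; exists 1; split => //; rewrite act1. Qed.

Definition PE (P : B -> Prop) := Sub (fun z => exists p w, P p /\ z = act p w).

Lemma nakayama (P : B -> Prop) (HP : is_prime P) n (xs : 'I_n -> E)
  (Hgen : forall x, exists bs : 'I_n -> B, x = \sum_i act (bs i) (xs i))
  (x0 : E) (Hx0 : forall u, ~ P u -> act u x0 <> 0) :
  exists y, forall u, ~ P u -> ~ PE P (act u y).
Proof.
have [//|nH] := pselect (exists y, forall u, ~ P u -> ~ PE P (act u y)).
have H : forall y, exists u, ~ P u /\ PE P (act u y).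
  move=> y; have [//|nH'] := pselect (exists u, ~ P u /\ PE P (act u y)).
  case: nH; exists y => u nu hu; apply: nH'; by exists u.
have [[P0 [PD PM]] [P1 PP]] := HP.
pose Span k := Sub (fun z => exists i : 'I_n, (i < k)%N /\ z = xs i).
have key : forall m, (m <= n)%N -> forall y, Loc P (Span (n - m)%N) y.
  elim=> [_ y|m IH Hm].
    apply: Loc_one => //; have [bs ->] := Hgen y.
    apply: submod_sum; first exact: Sub_submod.
    move=> i; apply: SubA; apply: Sub_gen; exists i; split => //; by rewrite subn0.
  have kn : (n - m.+1 < n)%N by rewrite ltn_subrL; apply/andP; split; [|apply: leq_ltn_trans Hm].
  set k := (n - m.+1)%N in kn *.
  have Ek : (n - m)%N = k.+1 by rewrite /k subnSK.
  have {}IH : forall y, Loc P (Span k.+1) y by rewrite -Ek; apply: IH; apply: ltnW.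
  pose i0 := Ordinal kn.
  pose PSpan := Sub (fun z => exists p w, P p /\ Span k.+1 w /\ z = act p w).
  have PE_PSpan : forall z, PE P z -> Loc P PSpan z.
    apply: Sub_min; first by apply: Loc_submod => //; exact: Sub_submod.
    move=> z [p [w [Pp ->]]]; have [v [nv hv]] := IH w.
    exists v; split => //; rewrite actC; apply: Sub_gen; exists p, (act v w); split => //.
  have dec1 : forall w, Span k.+1 w -> exists z0 c, Span k z0 /\ w = z0 + act c (xs i0).
    apply: Sub_min.
    - split; first by exists 0, 0; split; [exact: Sub0|rewrite act0l addr0].
      split.
        move=> z w [z1 [c1 [h1 ->]]] [z2 [c2 [h2 ->]]]; exists (z1 + z2), (c1 + c2); split.
          exact: SubD.
        by rewrite actDl addrACA.
      move=> c z [z1 [c1 [h1 ->]]]; exists (act c z1), (c * c1); split; first exact: SubA.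
      by rewrite actDr actM.
    move=> z [i [ik ->]]; rewrite ltnS leq_eqVlt in ik; case/orP: ik => ik.
      exists 0, 1; split; first exact: Sub0.
      by rewrite act1 add0r; congr (xs _); apply: val_inj; rewrite /= (eqP ik).
    exists (xs i), 0; split; last by rewrite act0l addr0.
    by apply: Sub_gen; exists i.
  have dec2 : forall w, PSpan w -> exists z0 q, Span k z0 /\ P q /\ w = z0 + act q (xs i0).
    apply: Sub_min.
    - split; first by exists 0, 0; split; [exact: Sub0|split => //; rewrite act0l addr0].
      split.
        move=> z w [z1 [c1 [h1 [p1 ->]]]] [z2 [c2 [h2 [p2 ->]]]]; exists (z1 + z2), (c1 + c2); split.
          exact: SubD.
        by split; [exact: PD|rewrite actDl addrACA].
      move=> c z [z1 [c1 [h1 [p1 ->]]]]; exists (act c z1), (c * c1); split; first exact: SubA.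
      by split; [exact: PM|rewrite actDr actM].
    move=> z [p [w [Pp [Sw ->]]]]; have [z0 [c [h0 ->]]] := dec1 w Sw.
    exists (act p z0), (p * c); split; first exact: SubA.
    split; first by rewrite mulrC; exact: PM.
    by rewrite actDr actM.
  have xsk : Loc P (Span k) (xs i0).
    have [u [nu hu]] := H (xs i0).
    have [v [nv hv]] := PE_PSpan _ hu.
    rewrite -actM in hv; have [z0 [q [h0 [Pq Eq]]]] := dec2 _ hv.
    exists (v * u - q); split.
      move=> h; have : P (v * u - q + q) by exact: PD.
      by rewrite subrK => /PP [].
    by rewrite actBl Eq addrK.
  have S1 : forall w, Span k.+1 w -> Loc P (Span k) w.
    apply: Sub_min; first by apply: Loc_submod => //; exact: Sub_submod.
    move=> z [i [ik ->]]; rewrite ltnS leq_eqVlt in ik; case/orP: ik => ik.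
      by have -> : i = i0 by apply: val_inj; rewrite /= (eqP ik).
    by apply: Loc_one => //; apply: Sub_gen; exists i.
  move=> y; have [v [nv hv]] := IH y; have [v' [nv' hv']] := S1 _ hv.
  exists (v' * v); split; first by move=> /PP [].
  by rewrite actM.
have [v [nv hv]] := key n (leqnn n) x0.
rewrite subnn in hv.
have : forall z, Span 0%N z -> z = 0.
  apply: Sub_min.
  - split => //; split; first by move=> z w -> ->; rewrite addr0.
    by move=> c z ->; rewrite act0r.
  by move=> z [i []].
by move=> /(_ _ hv) /(Hx0 _ nv).
Qed.

End Act.

Lemma exists_prime_avoid (B : comPzRingType) (I0 U : B -> Prop) :
  is_ideal I0 -> (forall u, U u -> ~ I0 u) -> U 1 ->
  (forall u v, U u -> U v -> U (u * v)) ->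
  exists P, is_prime P /\ (forall c, I0 c -> P c) /\ (forall u, U u -> ~ P u).
Proof.
move=> HI0 HU0 U1 UM.
pose good (I : B -> Prop) := is_ideal I /\ (forall c, I0 c -> I c) /\ (forall u, U u -> ~ I u).
have [A [gA maxA]] : exists A, good A /\ forall Bb, good Bb -> (forall t, A t -> Bb t) -> forall t, Bb t -> A t.
  apply: zorn_prop; first by split; [exact: HI0|split; [by []|exact: HU0]].
  move=> F FP [X FX] Ftot; split; first split.
  + by exists X; split => //; case: (FP X FX) => [[]].
  + split.
      move=> x y [X1 [F1 h1]] [X2 [F2 h2]].
      have [s|s] := Ftot _ _ F1 F2.
        exists X2; split => //; case: (FP X2 F2) => [[_ [D _]] _]; apply: D => //; exact: s.
      exists X1; split => //; case: (FP X1 F1) => [[_ [D _]] _]; apply: D => //; exact: s.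
    move=> r x [X1 [F1 h1]]; exists X1; split => //.
    by case: (FP X1 F1) => [[_ [_ M]] _]; apply: M.
  + split.
      by move=> c hc; exists X; split => //; case: (FP X FX) => _ [+ _]; apply.
    by move=> u Uu [X1 [F1 h1]]; case: (FP X1 F1) => _ [_ +]; move/(_ u Uu).
case: gA => [[A0 [AD AM]] [I0A AU]].
exists A; split; last by split.
split; first by split => //; split.
split; first exact: (AU 1 U1).
move=> x y Axy.
have [hx|nx] := pselect (A x); first by left.
have [hy|ny] := pselect (A y); first by right.
exfalso.
have ext : forall a, ~ A a -> exists u, U u /\ exists p d, A p /\ u = p + d * a.
  move=> a na.
  have [//|nex] := pselect (exists u, U u /\ exists p d, A p /\ u = p + d * a).
  pose J := fun z => exists p d, A p /\ z = p + d * a.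
  have gJ : good J.
    split; first split.
      by exists 0, 0; split => //; rewrite mul0r addr0.
    split.
      move=> z w [p1 [d1 [h1 ->]]] [p2 [d2 [h2 ->]]]; exists (p1 + p2), (d1 + d2); split.
        exact: AD.
      by ring.
    move=> r z [p1 [d1 [h1 ->]]]; exists (r * p1), (r * d1); split; first exact: AM.
    by ring.
    split.
      by move=> c /I0A hc; exists c, 0; split => //; rewrite mul0r addr0.
    by move=> u Uu Ju; apply: nex; exists u.
  case: na; apply: (maxA J gJ).
    by move=> t At; exists t, 0; split => //; rewrite mul0r addr0.
  by exists 0, 1; split => //; rewrite add0r mul1r.
have [u1 [U1' [p1 [d1 [Ap1 E1]]]]] := ext x nx.
have [u2 [U2' [p2 [d2 [Ap2 E2]]]]] := ext y ny.
apply: (AU (u1 * u2)); first exact: UM.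
have -> : u1 * u2 = p1 * u2 + (d1 * x) * p2 + (d1 * d2) * (x * y) by rewrite E1 E2; ring.
apply: (AD); first apply: (AD).
- by rewrite mulrC; apply: AM.
- exact: AM.
- exact: AM.
Qed.
Lemma lin2 (R : comPzRingType) (E : lmodType R) (a1 a2 c1 c2 : R) (w1 w2 z : E) :
  (a1*a2) *: (w1 + w2) - (a2*c1 + a1*c2) *: z = a2 *: (a1 *: w1 - c1 *: z) + a1 *: (a2 *: w2 - c2 *: z).
Proof.
rewrite !scalerBr !scalerA scalerDr scalerDl opprD [a2 * a1]mulrC.
by rewrite addrACA.
Qed.
Lemma lin3 (R : comPzRingType) (E : lmodType R) (a a' r r' : R) (z y : E) :
  a' *: (a *: z - r *: y) - a *: (a' *: z - r' *: y) = (a * r' - a' * r) *: y.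
Proof.
rewrite !scalerBr !scalerA opprB [a' * a]mulrC addrC addrA subrK scalerBl addrC //.
Qed.
Lemma f1 (K : fieldType) (a b c d : K) : b != 0 -> d != 0 -> a / b + c / d = (a * d + c * b) / (b * d).
Proof. move=> hb hd. field. by rewrite hb hd. Qed.

Definition goodN (R : comPzRingType) (E : lmodType R) (p : R -> Prop) (y : E) (N : E -> Prop) :=
  N 0 /\ (forall z w, N z -> N w -> N (z + w)) /\ (forall r z, N z -> N (r *: z)) /\
  (forall r z, p r -> N (r *: z)) /\ (forall a z, ~ p a -> N (a *: z) -> N z) /\ ~ N y.

Lemma line_functional (R : comPzRingType) (E : lmodType R) (p : R -> Prop) (Hp : is_prime p)
  (y : E) (N0 : E -> Prop) (K : fieldType) (h : R -> K)
  (hD : forall x z, h (x + z) = h x + h z) (hM : forall x z, h (x * z) = h x * h z)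
  (h1 : h 1 = 1) (h0 : forall r, h r = 0 <-> p r) :
  goodN p y N0 ->
  exists mu : E -> K, (forall z w, mu (z + w) = mu z + mu w) /\
    (forall r z, mu (r *: z) = h r * mu z) /\ mu y = 1.
Proof.
move=> gN0.
have [[p0 [pD pM]] [p1 pP]] := Hp.
have [A [gA maxA]] : exists A, goodN p y A /\
    forall Bb, goodN p y Bb -> (forall t, A t -> Bb t) -> forall t, Bb t -> A t.
  apply: zorn_prop; first exact: gN0.
  move=> F FP [X FX] Ftot.
  have FPX := FP X FX.
  split; first by exists X; split => //; case: FPX.
  split.
    move=> z w [X1 [F1 h1']] [X2 [F2 h2']].
    have [s|s] := Ftot _ _ F1 F2.
      by exists X2; split => //; case: (FP X2 F2) => _ [D _]; apply: D => //; exact: s.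
    by exists X1; split => //; case: (FP X1 F1) => _ [D _]; apply: D => //; exact: s.
  split.
    by move=> r z [X1 [F1 h1']]; exists X1; split => //; case: (FP X1 F1) => _ [_ [+ _]]; apply.
  split.
    by move=> r z pr; exists X; split => //; case: FPX => _ [_ [_ [+ _]]]; apply.
  split.
    move=> a z pa [X1 [F1 h1']]; exists X1; split => //.
    by case: (FP X1 F1) => _ [_ [_ [_ [+ _]]]] => /(_ a z pa h1').
  by move=> [X1 [F1 h1']]; case: (FP X1 F1) => _ [_ [_ [_ [_ +]]]]; apply.
case: gA => [A0 [AD [AS [Ap [Asat Ay]]]]].
have AN : forall z, A z -> A (- z) by move=> z Az; rewrite -scaleN1r; apply: AS.
have AB : forall z w, A z -> A w -> A (z - w) by move=> z w Az Aw; apply: AD => //; apply: AN.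
have hN : forall x z, h (x - z) = h x - h z.
  by move=> x z; apply/eqP; rewrite eq_sym subr_eq -hD subrK.
have key : forall z, exists ar : R * R, ~ p ar.1 /\ A (ar.1 *: z - ar.2 *: y).
  move=> z; have [Az|nAz] := pselect (A z).
    by exists (1, 0); split => //=; rewrite scale1r scale0r subr0.
  pose Bb := fun w => exists a c, ~ p a /\ A (a *: w - c *: z).
  have [[a [c [pa Ac]]]|nBy] := pselect (Bb y).
    have [pc|npc] := pselect (p c).
      case: Ay; apply: (Asat a) => //.
      by rewrite -(subrK (c *: z) (a *: y)); apply: AD => //; apply: Ap.
    by exists (c, a); split => //=; rewrite -opprB; apply: AN.
  have gB : goodN p y Bb.
    split; first by exists 1, 0; split => //; rewrite scaler0 scale0r subr0.
    split.
      move=> w1 w2 [a1 [c1 [pa1 A1]]] [a2 [c2 [pa2 A2]]].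
      exists (a1 * a2), (a2 * c1 + a1 * c2); split; first by move/pP => [].
      by rewrite lin2; apply: AD; apply: AS.
    split.
      move=> r w [a [c [pa Aw]]]; exists a, (r * c); split => //.
      by rewrite scalerA mulrC -scalerA -scalerA -scalerBr; apply: AS.
    split.
      by move=> r w pr; exists 1, 0; split => //; rewrite scale1r scale0r subr0; apply: Ap.
    split.
      move=> a0 w pa0 [a [c [pa Aw]]]; exists (a * a0), c; split; first by move/pP => [].
      by rewrite -scalerA.
    exact: nBy.
  case: nAz; apply: (maxA Bb gB).
    by move=> t At; exists 1, 0; split => //; rewrite scale1r scale0r subr0.
  by exists 1, 1; split => //; rewrite subrr.
have uniq : forall z a r a' r', ~ p a -> ~ p a' -> A (a *: z - r *: y) ->
    A (a' *: z - r' *: y) -> h a * h r' = h a' * h r.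
  move=> z a r a' r' pa pa' A1 A2.
  have : A ((a * r' - a' * r) *: y) by rewrite -(lin3 a a' r r' z y); apply: AB; apply: AS.
  have [pd|npd] := pselect (p (a * r' - a' * r)).
    by move=> _; apply/eqP; rewrite -subr_eq0 -!hM -hN; apply/eqP/h0.
  by move=> /(Asat _ _ npd).
have hnz : forall a, ~ p a -> h a != 0 by move=> a pa; apply/eqP => /h0.
pose mu z := h (sval (cid (key z))).2 / h (sval (cid (key z))).1.
have mu_spec : forall z a r, ~ p a -> A (a *: z - r *: y) -> mu z = h r / h a.
  move=> z a r pa Az; rewrite /mu; case: (cid (key z)) => [[a0 r0] /= [pa0 Az0]].
  apply/eqP; rewrite eqr_div ?hnz //; apply/eqP.
  by rewrite mulrC [RHS]mulrC (uniq z a0 r0 a r).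
exists mu; split.
  move=> z w; have [[a1 r1] /= [pa1 A1]] := key z; have [[a2 r2] /= [pa2 A2]] := key w.
  rewrite (mu_spec z a1 r1) // (mu_spec w a2 r2) // (mu_spec (z + w) (a1 * a2) (a2 * r1 + a1 * r2)).
  - rewrite hM hD !hM; have := hnz _ pa1; have := hnz _ pa2; move=> n2 n1; field.
    by rewrite n1 n2.
  - by move/pP => [].
  - by rewrite lin2; apply: AD; apply: AS.
split.
  move=> r z; have [[a1 r1] /= [pa1 A1]] := key z.
  rewrite (mu_spec z a1 r1) // (mu_spec (r *: z) a1 (r * r1)) //.
    by rewrite hM mulrA.
  by rewrite scalerA mulrC -scalerA -scalerA -scalerBr; apply: AS.
rewrite (mu_spec y 1 1) //; first by rewrite h1 divr1.
by rewrite subrr.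
Qed.

Section QuotGen.
Variables (V : zmodType) (N : V -> Prop).
Hypotheses (N0 : N 0) (NB : forall x y, N x -> N y -> N (x - y)).
Definition Np : {pred V} := fun v => `[< N v >].
Lemma Np_closed : zmod_closed Np.
Proof.
split; first exact/asboolP.
by move=> x y /asboolP hx /asboolP hy; apply/asboolP; apply: NB.
Qed.
HB.instance Definition _ := GRing.isZmodClosed.Build V Np Np_closed.
Lemma quot_trick :
  (forall (M : zmodType) (g1 g2 : V -> M),
     (forall u v, g1 (u + v) = g1 u + g1 v) -> (forall u v, g2 (u + v) = g2 u + g2 v) ->
     (forall v, N v -> g1 v = g2 v) -> forall v, g1 v = g2 v) -> forall v, N v.
Proof.
move=> H v.
have := H (Quotient.quot Np) (\pi) (fun _ => 0) _ _ _ v.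
have piE0 : forall u, (\pi_(Quotient.quot Np) u = 0) <-> N u.
  move=> u; split.
    move=> h0; have : u == 0 %[mod Quotient.quot Np] by apply/eqP; rewrite h0 pi_zeror.
    by rewrite -Quotient.idealrBE subr0 => /asboolP.
  move=> hu; have : u == 0 %[mod Quotient.quot Np].
    by rewrite -Quotient.idealrBE subr0; apply/asboolP.
  by move/eqP => ->; rewrite pi_zeror.
move=> h; apply/piE0; apply: h.
- by move=> x y; rewrite pi_addr.
- by move=> _ _; rewrite addr0.
- by move=> u /piE0.
Qed.
End QuotGen.

Lemma tensor_gen (R S : comPzRingType) (f : {rmorphism R -> S})
    (E : lmodType R) (T : lmodType S) (b : E -> S -> T) :
  is_tensor_base_change f b -> forall N : T -> Prop, N 0 ->
  (forall x y, N x -> N y -> N (x - y)) -> (forall x s, N (b x s)) -> forall t, N t.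
Proof.
move=> [bD [bD2 [bZ [bM Hu]]]] N N0 NB Nb.
apply: quot_trick => // M g1 g2 a1 a2 Hg t.
have [g [_ [_ gU]]] := Hu M (fun x s => g1 (b x s))
  ltac:(by move=> x y s /=; rewrite bD a1) ltac:(by move=> x s s' /=; rewrite bD2 a1)
  ltac:(by move=> r x s /=; rewrite bZ).
rewrite (gU g1 a1) // (gU g2 a2) // => x s; exact/esym/Hg.
Qed.

Lemma comap_prime (R S : comPzRingType) (f : {rmorphism R -> S}) (Q : S -> Prop) :
  is_prime Q -> is_prime (comap f Q).
Proof.
move=> [[Q0 [QD QM]] [Q1 QP]]; rewrite /comap; split; first split.
- by rewrite rmorph0.
- by split => [x y hx hy|r x hx]; rewrite ?rmorphD ?rmorphM; [apply: QD|apply: QM].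
- by split; [rewrite rmorph1|move=> x y; rewrite rmorphM; apply: QP].
Qed.

Theorem proposition4p4 (R S : comPzRingType) (f : {rmorphism R -> S})
    (E : lmodType R) (T : lmodType S) (b : E -> S -> T) :
  @almost_fg R E -> going_down f -> @is_tensor_base_change R S f E T b ->
  forall Q : S -> Prop, is_prime Q ->
    (@in_supp R E (comap f Q) <-> @in_supp S T Q).
Proof.
move=> [B [g [act [Ha [Hg [n [xs Hgen]]]]]]] gd Ht Q HQ.
have Ht' := Ht.
have [[Q0 [QD QM]] [Q1 QP]] := HQ.
have [bD [bD2 [bZ [bM Hu]]]] := Ht'.
have b0 : forall s, b 0 s = 0.
  move=> s; have h := bD 0 0 s; rewrite addr0 in h.
  by rewrite -{1}(addKr (b 0 s) (b 0 s)) -h addNr.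
split.
- move=> [Hp nLZ]; split => // LZT.
  have [x0 Hx0] : exists x0 : E, forall r, ~ Q (f r) -> r *: x0 <> 0.
    have [//|nex] := pselect (exists x0 : E, forall r, ~ Q (f r) -> r *: x0 <> 0).
    case: nLZ => x.
    have [//|nex2] := pselect (exists s, ~ comap f Q s /\ s *: x = 0).
    by case: nex; exists x => r nr hr; apply: nex2; exists r.
  have [P [HP [AnnP UP]]] := @exists_prime_avoid B (fun c => act c x0 = 0)
     (fun u => exists r, ~ Q (f r) /\ u = g r)
     ltac:(split; [exact: act0l|split => [x y /= hx hy|r x /= hx];
             [by rewrite actDl // hx hy addr0|by rewrite actM // hx act0r]])
     ltac:(by move=> u [r [nr ->]] /=; rewrite Hg; apply: Hx0)
     ltac:(by hnf; exists 1; rewrite !rmorph1; split)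
     ltac:(by move=> u v [r1 [n1 ->]] [r2 [n2 ->]]; exists (r1 * r2);
             rewrite !rmorphM; split => // /QP []).
  pose p' := comap g P.
  have Hp' : is_prime p' := comap_prime g HP.
  have p'p : forall r, p' r -> comap f Q r.
    move=> r pr; have [//|nq] := pselect (Q (f r)).
    by case: (UP (g r)) => //; exists r.
  have [y Hy] := nakayama Ha HP Hgen (x0 := x0)
     ltac:(by move=> u nu hu; apply: nu; apply: AnnP).
  have [Q' [HQ' [Q'Q Q'p']]] := gd (comap f Q) p' Q Hp Hp' p'p HQ (fun r => iff_refl _).
  have [K [h [hD [hM [h1 h0]]]]] := field_of_prime HQ'.
  have [[P0 [PD PM]] [P1 PP]] := HP.
  have PEZ : forall r z, PE act P z -> PE act P (r *: z).
    by move=> r z hz; rewrite -Hg; apply: SubA.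
  have gN : goodN p' y (fun z => exists a, ~ p' a /\ PE act P (a *: z)).
    split.
      by exists 1; split; [exact: Hp'.2.1|rewrite scaler0; exact: Sub0].
    split.
      move=> z w [a1 [n1 h1']] [a2 [n2 h2']]; exists (a1 * a2); split.
        by move/(Hp'.2.2) => [].
      rewrite scalerDr; apply: SubD.
        by rewrite mulrC -scalerA; apply: PEZ.
      by rewrite -scalerA; apply: PEZ.
    split.
      move=> r z [a [na hz]]; exists a; split => //.
      by rewrite scalerA mulrC -scalerA; apply: PEZ.
    split.
      move=> r z pr; exists 1; split; first exact: Hp'.2.1.
      by rewrite scale1r -Hg; apply: Sub_gen; exists (g r), z.
    split.
      move=> a0 z na0 [a [na hz]]; exists (a * a0); split.
        by move/(Hp'.2.2) => [].
      by rewrite -scalerA.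
    move=> [a [na hy]]; apply: (Hy (g a)) => //.
    by rewrite Hg.
  have [mu [muD [muZ muy]]] := @line_functional R E p' Hp' y
     (fun z => exists a, ~ p' a /\ PE act P (a *: z)) K (fun r => h (f r))
     ltac:(by move=> x z /=; rewrite rmorphD hD)
     ltac:(by move=> x z /=; rewrite rmorphM hM)
     ltac:(by rewrite /= rmorph1 h1)
     ltac:(by move=> r /=; rewrite h0; exact: Q'p')
     gN.
  have [G [GD [Gb _]]] := Hu K (fun z s => mu z * h s)
     ltac:(by move=> x z s /=; rewrite muD mulrDl)
     ltac:(by move=> x s s' /=; rewrite hD mulrDr)
     ltac:(by move=> r x s /=; rewrite muZ hM mulrCA mulrA).
  have [s [ns hs]] := LZT (b y 1).
  have G0 : G 0 = 0.
    have h' := GD 0 0; rewrite addr0 in h'.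
    by rewrite -{1}(addKr (G 0) (G 0)) -h' addNr.
  have : G (b y (s * 1)) = h s by rewrite Gb muy mul1r mulr1.
  rewrite bM hs G0 => /esym /h0 /Q'Q; exact: ns.
- move=> [_ nLZT]; split; first exact: comap_prime.
  move=> LZE; apply: nLZT => t.
  apply: (tensor_gen Ht (N := fun t => exists s, ~ Q s /\ s *: t = 0)).
  + by exists 1; split => //; rewrite scaler0.
  + move=> x z [s1 [n1 h1]] [s2 [n2 h2]]; exists (s1 * s2); split; first by move/QP => [].
    by rewrite scalerBr [in X in X - _]mulrC -!scalerA h1 h2 !scaler0 subrr.
  + move=> x s; have [r [nr hr]] := LZE x.
    exists (f r * 1); split; first by rewrite mulr1.
    by rewrite -bM -mulrA mul1r -bZ hr b0.
Qed.
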